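(* Let $\kappa$ be a standard kernel, let $F$ be a fixed finite simple graph on vertex set $\{1,\dots,k\}$ with edge set $E(F)$, let $H$ be a fixed graph on vertex set $\{1,\dots,n\}$ ($n\ge k$, $n\ge2$) with $m$ edges, and let $x=(x_1,\dots,x_n)\in[0,1]^n$ be fixed. Define $$T_F(z_1,\dots,z_k)=\prod_{\{i,j\}\in E(F)}\kappa(z_i,z_j),\qquad \mu_F(x)=\frac1{(n)_k}\sum_{(i_1,\dots,i_k)}T_F(x_{i_1},\dots,x_{i_k}),$$ where the sum runs over all $k$-tuples of pairwise distinct indices in $\{1,\dots,n\}$. Then for every $\varepsilon>m\frac{k(k-1)}{n(n-1)}$, $$\mathbb{P}\big[|t(F,G(x,H,\kappa))-\mu_F(x)|>\varepsilon\big]\le 2\exp\left(-\frac{2\big(\varepsilon-m\frac{k(k-1)}{n(n-1)}\big)^2}{\big(\binom n2-m\big)\big(\frac{k(k-1)}{n(n-1)}\big)^2}\right).$$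
   Context: A standard kernel is a measurable symmetric function $\kappa:[0,1]^2\to[0,1]$. $(n)_k=n(n-1)\cdots(n-k+1)$. For graphs $F$ on $k$ vertices and $G$ on $n$ vertices, $t(F,G)=|\mathrm{inj}(F,G)|/(n)_k$, where $\mathrm{inj}(F,G)$ is the set of injective maps from vertices of $F$ to vertices of $G$ mapping edges to edges. The random graph $G(x,H,\kappa)$ on $\{1,\dots,n\}$: each edge $\{i,j\}$ of $H$ is present; each non-edge $\{i,j\}$ of $H$ is present independently with probability $\kappa(x_i,x_j)$. *)

(* Defs.v *)
From Stdlib Require Import Reals.
From mathcomp Require Import all_boot.
Set Implicit Arguments. Unset Strict Implicit. Unset Printing Implicit Defensive.

Local Open Scope R_scope.

Definition Rltb (a b : R) : bool := if Rlt_dec a b then true else false.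

(* A standard kernel, as far as its values on [0,1]^2 are concerned:
   symmetric, values in [0,1].  (Measurability is irrelevant here since
   x is fixed.) *)
Definition standard_kernel (kappa : R -> R -> R) : Prop :=
  (forall a b, 0 <= a <= 1 -> 0 <= b <= 1 -> 0 <= kappa a b <= 1) /\
  (forall a b, 0 <= a <= 1 -> 0 <= b <= 1 -> kappa a b = kappa b a).

Definition simple_graph (n : nat) (G : rel 'I_n) : Prop :=
  symmetric G /\ irreflexive G.

(* edges {i,j}, represented by the pair (i,j) with i < j *)
Definition edges (n : nat) (G : rel 'I_n) : {set 'I_n * 'I_n} :=
  [set p : 'I_n * 'I_n | (p.1 < p.2)%N && G p.1 p.2].

Definition nonedges (n : nat) (G : rel 'I_n) : {set 'I_n * 'I_n} :=
  [set p : 'I_n * 'I_n | (p.1 < p.2)%N && ~~ G p.1 p.2].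

Definition injs (k n : nat) : {set {ffun 'I_k -> 'I_n}} :=
  [set f : {ffun 'I_k -> 'I_n} | injectiveb f].

Definition inj_hom (k n : nat) (F : rel 'I_k) (G : rel 'I_n)
  : {set {ffun 'I_k -> 'I_n}} :=
  [set f in injs k n | [forall i, forall j, F i j ==> G (f i) (f j)]].

Definition tdens (k n : nat) (F : rel 'I_k) (G : rel 'I_n) : R :=
  INR #|inj_hom F G| / INR (n ^_ k)%N.

Definition Gsample (n : nat) (H : rel 'I_n) (S : {set 'I_n * 'I_n}) : rel 'I_n :=
  fun i j => [|| H i j, (i, j) \in S | (j, i) \in S].

(* probability that G(x,H,kappa) has exactly the added non-edges S
   (S a subset of the non-edges of H) *)
Definition weight (n : nat) (kappa : R -> R -> R) (x : 'I_n -> R) (H : rel 'I_n)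
  (S : {set 'I_n * 'I_n}) : R :=
  \big[Rmult/1]_(p in nonedges H)
     (if p \in S then kappa (x p.1) (x p.2) else 1 - kappa (x p.1) (x p.2)).

Definition prob_G (n : nat) (kappa : R -> R -> R) (x : 'I_n -> R) (H : rel 'I_n)
  (E : rel 'I_n -> bool) : R :=
  \big[Rplus/0]_(S in powerset (nonedges H) | E (Gsample H S)) weight kappa x H S.

Definition T_F (k : nat) (F : rel 'I_k) (kappa : R -> R -> R) (z : 'I_k -> R) : R :=
  \big[Rmult/1]_(p in edges F) kappa (z p.1) (z p.2).

Definition mu_F (k n : nat) (F : rel 'I_k) (kappa : R -> R -> R) (x : 'I_n -> R) : R :=
  / INR (n ^_ k)%N * \big[Rplus/0]_(f in injs k n) T_F F kappa (fun i => x (f i)).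

(* Main.v *)
Require Import Defs.
From Stdlib Require Import Reals.
From mathcomp Require Import all_boot.
From mathcomp Require Import zify.
From HB Require Import structures.
From Stdlib Require Import Lra Psatz.
From Coquelicot Require Import Coquelicot.
Set Warnings "-ambiguous-paths -notation-overridden -redundant-canonical-projection".

Local Open Scope R_scope.

Lemma exp_le x y : x <= y -> exp x <= exp y.
Proof. intros [H|H]; [left; apply exp_increasing; exact H| rewrite H; lra]. Qed.

Section Hoef.
Variable p : R.
Hypothesis hp : 0 <= p <= 1.

Let q t := 1 - p + p * exp t.
Lemma q_pos t : 0 < q t.
Proof. unfold q. pose proof (exp_pos t).
destruct (Req_dec p 0) as [->|Hp]; [lra|].
assert (0 < p * exp t) by (apply Rmult_lt_0_compat; lra). lra. Qed.

Let g t := t^2/8 - (- p * t + ln (q t)).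
Let g1 t := t/4 + p - p * exp t / q t.
Let g2 t := 1/4 - p * exp t * (1 - p) / (q t)^2.

Lemma g_der t : is_derive g t (g1 t).
Proof. unfold g, g1, q. pose proof (q_pos t). unfold q in H.
auto_derive. lra. field. lra. Qed.

Lemma g1_der t : is_derive g1 t (g2 t).
Proof. unfold g1, g2, q. pose proof (q_pos t). unfold q in H.
auto_derive. lra. field. lra. Qed.

Lemma g2_nonneg t : 0 <= g2 t.
Proof. unfold g2. pose proof (q_pos t). pose proof (exp_pos t).
set A := p * exp t. assert (0 <= A) by (unfold A; nra).
assert (q t = A + (1 - p)) by (unfold q, A; ring). rewrite H2.
rewrite H2 in H.
assert (A * (1 - p) / (A + (1 - p)) ^ 2 <= 1/4).
{ have Hd : 0 < (A + (1 - p)) ^ 2 by nra.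
  have Hx : A * (1 - p) <= (A + (1 - p)) ^ 2 / 4.
  { have := pow2_ge_0 (A - (1 - p)). intro. replace ((A + (1 - p)) ^ 2 / 4) with (A * (1 - p) + (A - (1 - p)) ^ 2 / 4) by field. lra. }
  replace (1/4) with (((A + (1 - p)) ^ 2 / 4) * / (A + (1 - p)) ^ 2) by (field; lra).
  unfold Rdiv at 1. apply Rmult_le_compat_r; [left; apply Rinv_0_lt_compat|]; lra. }
lra. Qed.

Lemma cont_of_der f df x : is_derive f x df -> continuity_pt f x.
Proof. intros Hd. apply is_derive_Reals in Hd.
exact (derivable_continuous_pt f x (exist _ df Hd)). Qed.

Lemma g1_sign t : exists d, g1 t = g2 d * t.
Proof.
destruct (MVT_gen g1 0 t g2) as [c [_ Hc]].
- intros; apply g1_der.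
- intros; eapply cont_of_der; apply g1_der.
- exists c. unfold g1 at 2 in Hc. rewrite exp_0 in Hc. unfold q in Hc.
  rewrite exp_0 in Hc.
  replace (0 / 4 + p - p * 1 / (1 - p + p * 1)) with 0 in Hc by (field; lra).
  lra.
Qed.

Lemma g_nonneg t : 0 <= g t.
Proof.
destruct (MVT_gen g 0 t g1) as [c [Hc1 Hc]].
- intros; apply g_der.
- intros; eapply cont_of_der; apply g_der.
- assert (g 0 = 0). { unfold g, q. rewrite exp_0. replace (1 - p + p * 1) with 1 by ring.
    rewrite ln_1. simpl. lra. }
  destruct (g1_sign c) as [d Hd]. pose proof (g2_nonneg d).
  assert (0 <= c * t).
  { unfold Rmin, Rmax in Hc1; destruct (Rle_dec 0 t); nra. }
  rewrite Hd in Hc. nra.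
Qed.

Lemma hoeffding_bern t : p * exp ((1 - p) * t) + (1 - p) * exp (- p * t) <= exp (t^2/8).
Proof.
pose proof (g_nonneg t). unfold g in H.
replace (p * exp ((1 - p) * t) + (1 - p) * exp (- p * t)) with (exp (- p * t + ln (q t))).
- apply exp_le. lra.
- rewrite exp_plus exp_ln; [|apply q_pos]. unfold q.
  replace ((1 - p) * t) with (t + - p * t) by ring. rewrite exp_plus. ring.
Qed.
End Hoef.

Lemma Rplus_A : associative Rplus. Proof. move=> *; ring. Qed.
Lemma Rmult_A : associative Rmult. Proof. move=> *; ring. Qed.
HB.instance Definition _ := Monoid.isComLaw.Build R 0 Rplus Rplus_A Rplus_comm Rplus_0_l.
HB.instance Definition _ := Monoid.isComLaw.Build R 1 Rmult Rmult_A Rmult_comm Rmult_1_l.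
HB.instance Definition _ := Monoid.isMulLaw.Build R 0 Rmult Rmult_0_l Rmult_0_r.
HB.instance Definition _ := Monoid.isAddLaw.Build R Rmult Rplus Rmult_plus_distr_r Rmult_plus_distr_l.

Section Ex.
Variable T : finType.

Definition Wt (A : {set T}) (w : T -> R) (S : {set T}) : R :=
  \big[Rmult/1]_(p in A) (if p \in S then w p else 1 - w p).
Definition Ex (A : {set T}) (w : T -> R) (g : {set T} -> R) : R :=
  \big[Rplus/0]_(S in powerset A) (Wt A w S * g S).

Lemma sum_powersetD1 (a : T) (A : {set T}) (G : {set T} -> R) : a \in A ->
  \big[Rplus/0]_(S in powerset A) G S =
  \big[Rplus/0]_(S in powerset (A :\ a)) (G S + G (a |: S)).
Proof.
move=> aA.
rewrite (bigID (fun S : {set T} => a \in S)) /= big_split /= Rplus_comm. f_equal.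
- apply: eq_bigl => S. by rewrite !powersetE subsetD1.
- rewrite (reindex_onto (fun S => a |: S) (fun S => S :\ a)) /=; last first.
    by move=> S /andP[_ aS]; rewrite setD1K.
  apply: eq_bigl => S. rewrite !powersetE subsetD1 setU11 andbT.
  case: (boolP (a \in S)) => aS.
  + rewrite andbF. apply/negbTE/andP => -[_ /eqP E]. move: aS. rewrite -{1}E setD11. done.
  + rewrite setU1K // eqxx andbT. by rewrite subUset sub1set aA andbT.
Qed.

Lemma Wt_D1 (a : T) (A : {set T}) w (S : {set T}) : a \in A ->
  Wt A w S = (if a \in S then w a else 1 - w a) * Wt (A :\ a) w S.
Proof. by move=> aA; rewrite /Wt (big_setD1 _ aA). Qed.

Lemma Wt_U1 (a : T) (A : {set T}) w (S : {set T}) : Wt (A :\ a) w (a |: S) = Wt (A :\ a) w S.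
Proof.
apply: eq_bigr => p; rewrite in_setD1 => /andP[pa _].
by rewrite in_setU1 (negbTE pa).
Qed.

Lemma Ex_D1 (a : T) (A : {set T}) (w : T -> R) (g : {set T} -> R) : a \in A ->
  Ex A w g = w a * Ex (A :\ a) w (fun S => g (a |: S)) + (1 - w a) * Ex (A :\ a) w g.
Proof.
move=> aA. rewrite /Ex (sum_powersetD1 _ _ _ aA) big_split /= !big_distrr /= Rplus_comm.
f_equal; apply: eq_bigr => S; rewrite powersetE subsetD1 => /andP[_ aS].
- rewrite (Wt_D1 _ _ _ _ aA) setU11 Wt_U1. ring.
- rewrite (Wt_D1 _ _ _ _ aA) (negbTE aS). ring.
Qed.

Lemma Ex_set0 (w : T -> R) (g : {set T} -> R) : Ex set0 w g = g set0.
Proof. by rewrite /Ex powerset0 big_set1 /Wt big_set0 Rmult_1_l. Qed.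

Lemma set_ind (P : {set T} -> Prop) : P set0 ->
  (forall (A : {set T}) (a : T), a \in A -> P (A :\ a) -> P A) -> forall A, P A.
Proof.
move=> H0 HS A. move: {2}#|A| (erefl #|A|) => n.
elim: n A => [|n IH] A HA.
- by move/eqP: HA; rewrite cards_eq0 => /eqP ->.
- have : A != set0 by rewrite -card_gt0 HA.
  case/set0Pn => a aA. apply: (HS _ a aA). apply: IH.
  by move: HA; rewrite (cardsD1 a) aA => -[].
Qed.

Lemma Ex_ext (A : {set T}) (w : T -> R) (g1 g2 : {set T} -> R) : (forall S : {set T}, S \subset A -> g1 S = g2 S) ->
  Ex A w g1 = Ex A w g2.
Proof. move=> H; apply: eq_bigr => S; rewrite powersetE => /H ->. done. Qed.

Lemma Wt_ge0 (A : {set T}) w (S : {set T}) : (forall p, p \in A -> 0 <= w p <= 1) -> 0 <= Wt A w S.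
Proof.
move=> Hw; apply: big_ind => //.
- lra.
- move=> u v Hu Hv; nra.
- move=> p /Hw Hp; case: (p \in S); lra.
Qed.

Lemma Ex_le (A : {set T}) (w : T -> R) (g1 g2 : {set T} -> R) : (forall p, p \in A -> 0 <= w p <= 1) ->
  (forall S : {set T}, S \subset A -> g1 S <= g2 S) -> Ex A w g1 <= Ex A w g2.
Proof.
move=> Hw H; apply: big_ind2.
- lra.
- move=> u1 u2 v1 v2; lra.
- move=> S; rewrite powersetE => /H HS. apply: Rmult_le_compat_l => //. exact: Wt_ge0.
Qed.

Lemma Ex_lin (A : {set T}) (w : T -> R) (a b : R) (g1 g2 : {set T} -> R) :
  Ex A w (fun S => a * g1 S + b * g2 S) = a * Ex A w g1 + b * Ex A w g2.
Proof.
rewrite /Ex !big_distrr -big_split /=. apply: eq_bigr => S _; ring.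
Qed.

Lemma Ex_const (A : {set T}) (w : T -> R) r : Ex A w (fun _ => r) = r.
Proof.
elim/set_ind: A => [|A a aA IH]; first by rewrite Ex_set0.
by rewrite (Ex_D1 _ _ _ _ aA) IH; ring.
Qed.

End Ex.
Arguments Wt {T}. Arguments Ex {T}. Arguments sum_powersetD1 {T}. Arguments Wt_D1 {T}. Arguments Wt_U1 {T}. Arguments Ex_D1 {T}. Arguments Ex_set0 {T}. Arguments set_ind {T}. Arguments Ex_ext {T}. Arguments Wt_ge0 {T}. Arguments Ex_le {T}. Arguments Ex_lin {T}. Arguments Ex_const {T}.

Lemma abs_le_inv x c : Rabs x <= c -> - c <= x <= c.
Proof. split_Rabs; lra. Qed.

Section McD.
Variable T : finType.
Variable w : T -> R.

Lemma Ex_scale (A : {set T}) r g : Ex A w (fun S => r * g S) = r * Ex A w g.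
Proof. rewrite /Ex big_distrr /=. apply: eq_bigr => S _; ring. Qed.

Lemma mgf (A : {set T}) : forall (g : {set T} -> R) (c s : R),
  (forall p, p \in A -> 0 <= w p <= 1) -> 0 <= c ->
  (forall (S : {set T}) (a : T), a \in A -> S \subset A :\ a -> Rabs (g (a |: S) - g S) <= c) ->
  Ex A w (fun S => exp (s * (g S - Ex A w g))) <= exp (s^2 * INR #|A| * c^2 / 8).
Proof.
elim/(@set_ind T): A => [|A a aA IH] g c s Hw Hc Hbd.
- rewrite !Ex_set0 cards0. apply: exp_le.
  have -> : g set0 - g set0 = 0 by ring. simpl. lra.
- set g1 := fun S => g (a |: S).
  have Hw' : forall p, p \in A :\ a -> 0 <= w p <= 1.
    by move=> p; rewrite in_setD1 => /andP[_ /Hw].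
  have Hbd1 : forall (S : {set T}) (b : T), b \in A :\ a -> S \subset (A :\ a) :\ b ->
      Rabs (g1 (b |: S) - g1 S) <= c.
    move=> S b; rewrite in_setD1 => /andP[ba bA] /subsetD1P[SA bS].
    move/subsetD1P: SA => [SA aS].
    rewrite /g1 setUCA. apply: Hbd => //.
    apply/subsetD1P; split.
    + by rewrite subUset sub1set aA SA.
    + by rewrite in_setU1 negb_or ba bS.
  have Hbd0 : forall (S : {set T}) (b : T), b \in A :\ a -> S \subset (A :\ a) :\ b ->
      Rabs (g (b |: S) - g S) <= c.
    move=> S b; rewrite in_setD1 => /andP[ba bA] /subsetD1P[SA bS].
    move/subsetD1P: SA => [SA aS].
    apply: Hbd => //. by apply/subsetD1P; split.
  set E1 := Ex (A :\ a) w g1.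
  set E0 := Ex (A :\ a) w g.
  set B := exp (s ^ 2 * INR #|A :\ a| * c ^ 2 / 8).
  have IH1 := IH g1 c s Hw' Hc Hbd1.
  have IH0 := IH g c s Hw' Hc Hbd0.
  have EA : Ex A w g = w a * E1 + (1 - w a) * E0 by rewrite (Ex_D1 a A w g aA).
  rewrite (Ex_D1 _ _ _ _ aA) EA.
  set M := w a * E1 + (1 - w a) * E0.
  have K1 : Ex (A :\ a) w (fun S => exp (s * (g (a |: S) - M))) =
            exp (s * (E1 - M)) * Ex (A :\ a) w (fun S => exp (s * (g1 S - E1))).
    rewrite -Ex_scale /Ex. apply: eq_bigr => S _. rewrite -exp_plus /g1. do 2 f_equal; ring.
  have K0 : Ex (A :\ a) w (fun S => exp (s * (g S - M))) =
            exp (s * (E0 - M)) * Ex (A :\ a) w (fun S => exp (s * (g S - E0))).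
    rewrite -Ex_scale /Ex. apply: eq_bigr => S _. rewrite -exp_plus. do 2 f_equal; ring.
  rewrite K1 K0.
  have Hwa := Hw a aA.
  have HD : - c <= E1 - E0 <= c.
    have -> : E1 - E0 = Ex (A :\ a) w (fun S => 1 * g1 S + (-1) * g S)
      by rewrite Ex_lin /E1 /E0; ring.
    split.
    + rewrite -{1}(Ex_const (A :\ a) w (- c)). apply: Ex_le => // S SA.
      have := abs_le_inv _ _ (Hbd S a aA SA). rewrite /g1. lra.
    + rewrite -[X in _ <= X](Ex_const (A :\ a) w c). apply: Ex_le => // S SA.
      have := abs_le_inv _ _ (Hbd S a aA SA). rewrite /g1. lra.
  set t := s * (E1 - E0).
  have Ht1 : s * (E1 - M) = (1 - w a) * t by rewrite /t /M; ring.
  have Ht0 : s * (E0 - M) = - w a * t by rewrite /t /M; ring.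
  rewrite Ht1 Ht0.
  have Hh := hoeffding_bern (w a) Hwa t.
  have Ht2 : t ^ 2 <= s ^ 2 * c ^ 2.
    rewrite /t. have : (E1 - E0) ^ 2 <= c ^ 2 by nra. nra.
  have Hcard : INR #|A| = INR #|A :\ a| + 1.
    by rewrite (cardsD1 a A) aA add1n S_INR.
  have e1 := exp_pos ((1 - w a) * t).
  have e0 := exp_pos (- w a * t).
  apply: (Rle_trans _ (B * (w a * exp ((1 - w a) * t) + (1 - w a) * exp (- w a * t)))).
    have H1 := Rmult_le_compat_l _ _ _ (Rlt_le _ _ e1) IH1.
    have H0 := Rmult_le_compat_l _ _ _ (Rlt_le _ _ e0) IH0.
    rewrite -/B in H1 H0.
    apply: (Rle_trans _ (w a * (exp ((1 - w a) * t) * B) + (1 - w a) * (exp (- w a * t) * B))).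
    + apply Rplus_le_compat; apply Rmult_le_compat_l; try lra; [exact H1 | exact H0].
    + right; ring.
  apply: (Rle_trans _ (B * exp (t ^ 2 / 8))).
    apply: Rmult_le_compat_l => //. left; apply exp_pos.
  rewrite /B -exp_plus. apply: exp_le. rewrite Hcard. lra.
Qed.

Lemma tail (A : {set T}) (g : {set T} -> R) (c d N : R) :
  (forall p, p \in A -> 0 <= w p <= 1) -> 0 <= c ->
  (forall (S : {set T}) (a : T), a \in A -> S \subset A :\ a -> Rabs (g (a |: S) - g S) <= c) ->
  0 < d -> INR #|A| <= N -> 0 < N * c ^ 2 ->
  Ex A w (fun S => if Rltb d (g S - Ex A w g) then 1 else 0)
    <= exp (- (2 * d ^ 2) / (N * c ^ 2)).
Proof.
move=> Hw Hc Hbd Hd HN Hpos.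
set E := Ex A w g.
have HN0 : N <> 0 by move=> h; rewrite h in Hpos; lra.
have Hc0 : c <> 0 by move=> h; rewrite h in Hpos; lra.
have HNp : 0 < N. { have : 0 < c ^ 2 by nra. nra. }
set s := 4 * d / (N * c ^ 2).
have Hs : 0 < s.
  rewrite /s /Rdiv. apply: Rmult_lt_0_compat; [lra|]. by apply: Rinv_0_lt_compat.
apply: (Rle_trans _ (Ex A w (fun S => exp (- (s * d)) * exp (s * (g S - E))))).
  apply: Ex_le => // S _. rewrite -exp_plus /Rltb. case: Rlt_dec => h.
  - rewrite -exp_0. apply: exp_le. nra.
  - left; apply exp_pos.
rewrite Ex_scale.
have M := mgf A g c s Hw Hc Hbd.
apply: (Rle_trans _ (exp (- (s * d)) * exp (s ^ 2 * INR #|A| * c ^ 2 / 8))).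
  apply: Rmult_le_compat_l; [left; apply exp_pos | exact M].
rewrite -exp_plus; apply: exp_le.
apply: (Rle_trans _ (- (s * d) + s ^ 2 * N * c ^ 2 / 8)).
  have hh : 0 <= s ^ 2 * c ^ 2 by nra. nra.
right. rewrite /s. field. split => //.
Qed.

End McD.

Local Close Scope R_scope.

Lemma card_offdiag (N : nat) : #|[set p : 'I_N * 'I_N | p.1 != p.2]| = N * (N - 1).
Proof.
rewrite -sum1dep_card.
rewrite -(pair_big_dep xpredT (fun i j => i != j) (fun _ _ => 1)) /=.
rewrite (eq_bigr (fun _ => N - 1)); first by rewrite sum_nat_const card_ord.
move=> i _. rewrite sum1dep_card.
have -> : [set j : 'I_N | i != j] = [set j | j \in predC1 i].
  by apply/setP => j; rewrite !inE eq_sym.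
by rewrite cardsE cardC1 card_ord subn1.
Qed.

Lemma card_le_sum (U I : finType) (B : {set U}) (P : pred I) (C : I -> {set U}) :
  (forall x, x \in B -> exists i, P i && (x \in C i)) ->
  #|B| <= \sum_(i | P i) #|C i|.
Proof.
move=> HB. rewrite -sum1_card.
have -> : \sum_(i | P i) #|C i| = \sum_(i | P i) \sum_(x in C i) 1
  by apply: eq_bigr => i _; rewrite sum1_card.
rewrite (exchange_big_dep xpredT) //=.
rewrite [X in _ <= X](bigID (fun x => x \in B)) /=.
apply: leq_trans (leq_addr _ _).
apply: leq_sum => x xB. case: (HB x xB) => i /andP[Pi xi].
by rewrite (bigD1 i) ?Pi ?xi //= addnC leq_addl.
Qed.

Section Fib.
Variables k n : nat.

Definition fib (u v : 'I_k) (i j : 'I_n) : {set {ffun 'I_k -> 'I_n}} :=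
  [set g in injs k n | (g u == i) && (g v == j)].

Definition sw (a b x : 'I_n) : 'I_n := if x == a then b else if x == b then a else x.

Lemma swK a b : involutive (sw a b).
Proof.
move=> x; rewrite /sw.
by repeat (case: eqP => //=); intros; subst; congruence.
Qed.

Lemma sw_inj a b : injective (sw a b).
Proof. exact: can_inj (swK a b). Qed.

Lemma swL a b : sw a b a = b. Proof. by rewrite /sw eqxx. Qed.
Lemma swD a b z : z != a -> z != b -> sw a b z = z.
Proof. by move=> za zb; rewrite /sw (negbTE za) (negbTE zb). Qed.

Lemma fib_le u v i j i' j' : i != j -> i' != j' -> #|fib u v i j| <= #|fib u v i' j'|.
Proof.
move=> ij ij'.
pose s1 := sw i i'. pose s2 := sw (s1 j) j'.
pose phi (g : {ffun 'I_k -> 'I_n}) := [ffun t => s2 (s1 (g t))].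
have phiinj : injective phi.
  move=> g1 g2 E; apply/ffunP => t.
  have := congr1 (fun h : {ffun 'I_k -> 'I_n} => h t) E; rewrite !ffunE.
  by move/sw_inj/sw_inj.
rewrite -(card_imset (fib u v i j) phiinj). apply: subset_leq_card.
apply/subsetP => _ /imsetP[g gin ->]. move: gin; rewrite !inE => /andP[ginj /andP[/eqP gu /eqP gv]].
apply/and3P; split.
- apply/injectiveP => t1 t2; rewrite !ffunE => /sw_inj/sw_inj. exact: (injectiveP _ ginj).
- rewrite ffunE gu /s1 swL /s2 swD //.
  apply/eqP => E. have : sw i i' j = sw i i' i by rewrite swL; exact: (esym E).
  move/sw_inj => ji. by rewrite ji eqxx in ij.
- by rewrite ffunE gv /s2 swL.
Qed.

Lemma card_injs : #|injs k n| = n ^_ k.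
Proof. by rewrite /injs card_inj_ffuns !card_ord. Qed.

Lemma fib_bound u v i j : i != j -> #|fib u v i j| * (n * (n - 1)) <= n ^_ k.
Proof.
move=> ij.
rewrite -card_injs -[X in _ <= X]sum1_card.
rewrite (partition_big (fun g : {ffun 'I_k -> 'I_n} => (g u, g v)) xpredT) //=.
rewrite -card_offdiag mulnC -sum_nat_cond_const.
rewrite [X in _ <= X](bigID (fun p : 'I_n * 'I_n => p.1 != p.2)) /=.
apply: leq_trans (leq_addr _ _).
apply: leq_sum => p pd. rewrite sum1dep_card.
have -> : [set x | (x \in injs k n) && ((x u, x v) == p)] = fib u v p.1 p.2.
  by apply/setP => g; rewrite !inE; case: p {pd}.
exact: fib_le.
Qed.

End Fib.

Local Open Scope R_scope.

Section Gen.
Variable T : finType.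
Variable w : T -> R.

Lemma Ex_sub (A B : {set T}) : B \subset A ->
  Ex A w (fun S => if B \subset S then 1 else 0) = \big[Rmult/1]_(p in B) w p.
Proof.
elim/(@set_ind T): A B => [|A a aA IH] B BA.
- move: BA; rewrite subset0 => /eqP ->. by rewrite Ex_set0 sub0set big_set0.
- rewrite (Ex_D1 a A w _ aA). case: (boolP (a \in B)) => aB.
  + have E1 : Ex (A :\ a) w (fun S => if B \subset a |: S then 1 else 0) =
              Ex (A :\ a) w (fun S => if B :\ a \subset S then 1 else 0).
      apply: Ex_ext => S _. congr (if _ then _ else _).
      apply/subsetP/subsetP => h p.
      * rewrite in_setD1 => /andP[pa pB]. by move: (h p pB); rewrite in_setU1 (negbTE pa).
      * move=> pB. rewrite in_setU1. case: (eqVneq p a) => //= pa.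
        apply: h. by rewrite in_setD1 pa.
    have E0 : Ex (A :\ a) w (fun S => if B \subset S then 1 else 0) = 0.
      rewrite -[RHS](Ex_const (A :\ a) w 0). apply: Ex_ext => S SA. case: ifP => // BS.
      have := subsetP SA a (subsetP BS a aB). by rewrite in_setD1 eqxx.
    rewrite E1 E0 IH.
    * rewrite (big_setD1 a aB) /=. ring.
    * apply/subsetP => p; rewrite !in_setD1 => /andP[-> pB]. exact: (subsetP BA p pB).
  + have E1 : Ex (A :\ a) w (fun S => if B \subset a |: S then 1 else 0) =
              Ex (A :\ a) w (fun S => if B \subset S then 1 else 0).
      apply: Ex_ext => S _. congr (if _ then _ else _).
      apply/subsetP/subsetP => h p pB.
      * move: (h p pB); rewrite in_setU1 => /orP[/eqP pa|//].
        by move: aB; rewrite -pa pB.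
      * by rewrite in_setU1 h ?orbT.
    rewrite E1 IH.
    * ring.
    * apply/subsetP => p pB. rewrite in_setD1 (subsetP BA p pB) andbT.
      apply/eqP => pa. by rewrite -pa pB in aB.
Qed.

Lemma Ex_sum (I : finType) (A : {set T}) (P : pred I) (G : I -> {set T} -> R) :
  Ex A w (fun S => \big[Rplus/0]_(i | P i) G i S) = \big[Rplus/0]_(i | P i) Ex A w (G i).
Proof.
rewrite /Ex. under eq_bigr do rewrite big_distrr. exact: exchange_big.
Qed.

End Gen.

Lemma Rabs_sum (I : finType) (P : pred I) (G : I -> R) :
  Rabs (\big[Rplus/0]_(i | P i) G i) <= \big[Rplus/0]_(i | P i) Rabs (G i).
Proof.
apply: (big_ind2 (fun a b => Rabs a <= b)).
- rewrite Rabs_R0; lra.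
- move=> a b c d h1 h2. apply: Rle_trans (Rabs_triang _ _) _. lra.
- move=> i _; lra.
Qed.

Lemma sum_le (I : finType) (P : pred I) (G1 G2 : I -> R) :
  (forall i, P i -> G1 i <= G2 i) ->
  \big[Rplus/0]_(i | P i) G1 i <= \big[Rplus/0]_(i | P i) G2 i.
Proof.
move=> h. apply: (big_ind2 (fun a b => a <= b)) => //.
- lra.
- move=> a b c d h1 h2; lra.
Qed.

Lemma sum_minus (I : finType) (P : pred I) (G1 G2 : I -> R) :
  \big[Rplus/0]_(i | P i) G1 i - \big[Rplus/0]_(i | P i) G2 i =
  \big[Rplus/0]_(i | P i) (G1 i - G2 i).
Proof.
have -> : \big[Rplus/0]_(i | P i) (G1 i - G2 i) =
          \big[Rplus/0]_(i | P i) G1 i + \big[Rplus/0]_(i | P i) (- G2 i) by rewrite -big_split.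
rewrite -(big_morph Ropp Ropp_plus_distr Ropp_0). ring.
Qed.

Lemma INR_sum (I : finType) (P : pred I) (G : I -> nat) :
  INR (\sum_(i | P i) G i) = \big[Rplus/0]_(i | P i) INR (G i).
Proof. exact: (big_morph INR plus_INR). Qed.

Lemma frac_le a b c d : 0 < b -> 0 < d -> a * d <= c * b -> a / b <= c / d.
Proof.
move=> hb hd h. apply: (Rmult_le_reg_r (b * d)); first nra.
have -> : a / b * (b * d) = a * d by field; lra.
have -> : c / d * (b * d) = c * b by field; lra.
exact: h.
Qed.

Section Graph.
Variables (kappa : R -> R -> R) (k n : nat) (F : rel 'I_k) (H : rel 'I_n) (x : 'I_n -> R).
Hypothesis Hk : standard_kernel kappa.
Hypothesis HF : simple_graph F.
Hypothesis HH : simple_graph H.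
Hypothesis Hx : forall i, 0 <= x i <= 1.
Hypothesis Hn2 : (2 <= n)%N.
Hypothesis Hkn : (k <= n)%N.

Definition w (p : 'I_n * 'I_n) : R := kappa (x p.1) (x p.2).
Definition np (i j : 'I_n) : 'I_n * 'I_n := if (i < j)%N then (i, j) else (j, i).
Definition cc := INR (k * (k - 1)) / INR (n * (n - 1)).

Lemma kap01 i j : 0 <= kappa (x i) (x j) <= 1.
Proof. by case: Hk => h _; apply: h. Qed.

Lemma w01 p : 0 <= w p <= 1.
Proof. exact: kap01. Qed.

Lemma w_np i j : w (np i j) = kappa (x i) (x j).
Proof. rewrite /w /np; case: ifP => _ //=. by case: Hk => _ h; apply: h. Qed.

Lemma FS : symmetric F. Proof. by case: HF. Qed.
Lemma Firr : irreflexive F. Proof. by case: HF. Qed.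
Lemma HS : symmetric H. Proof. by case: HH. Qed.

Lemma inj_homP (G : rel 'I_n) g :
  reflect (g \in injs k n /\ forall u v, F u v -> G (g u) (g v)) (g \in inj_hom F G).
Proof.
rewrite /inj_hom in_set /=. apply: (iffP andP) => [[gi /forallP Hf]|[gi Hf]]; split => //.
- move=> u v Fuv. by move: (Hf u) => /forallP /(_ v) /implyP; apply.
- apply/forallP => u; apply/forallP => v; apply/implyP; exact: Hf.
Qed.

Lemma injsP (g : {ffun 'I_k -> 'I_n}) : g \in injs k n -> injective g.
Proof. by rewrite inE => /injectiveP. Qed.

Lemma hom_sub S a : inj_hom F (Gsample H S) \subset inj_hom F (Gsample H (a |: S)).
Proof.
apply/subsetP => g /inj_homP [gi Hg]; apply/inj_homP; split => // u v Fuv.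
move: (Hg u v Fuv); rewrite /Gsample !in_setU1 => /or3P[->|->|->] //; by rewrite ?orbT.
Qed.

Lemma hom_diff S (a : 'I_n * 'I_n) : a.1 != a.2 ->
  (#|inj_hom F (Gsample H (a |: S)) :\: inj_hom F (Gsample H S)| * (n * (n - 1))
     <= k * (k - 1) * n ^_ k)%N.
Proof.
move=> a12.
apply: (@leq_trans ((\sum_(q : 'I_k * 'I_k | F q.1 q.2) #|fib k n q.1 q.2 a.1 a.2|) * (n * (n - 1)))).
- rewrite leq_mul2r; apply/orP; right. apply: card_le_sum => g.
  rewrite inE => /andP[gnot gin]. move/inj_homP: gin => [gi Hg].
  move: gnot; rewrite inE gi /= negb_forall => /existsP [u].
  rewrite negb_forall => /existsP [v]; rewrite negb_imply => /andP[Fuv nG].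
  move: (Hg u v Fuv) nG; rewrite /Gsample !in_setU1.
  case: (eqVneq (g u, g v) a) => [E|_].
  + move=> _ _. exists (u, v). by rewrite /= Fuv inE gi -E /= !eqxx.
  + case: (eqVneq (g v, g u) a) => [E|_].
    * move=> _ _. exists (v, u). by rewrite /= FS Fuv inE gi -E /= !eqxx.
    * by rewrite /= => h1 h2; rewrite h1 in h2.
- rewrite big_distrl /=. apply: (@leq_trans (\sum_(q : 'I_k * 'I_k | F q.1 q.2) n ^_ k)).
  + apply: leq_sum => q _. exact: fib_bound.
  + rewrite sum_nat_cond_const leq_mul2r; apply/orP; right.
    rewrite -card_offdiag. apply: subset_leq_card. apply/subsetP => q; rewrite !inE.
    move=> Fq; apply/eqP => E; move: Fq; by rewrite E Firr.
Qed.

Lemma nn_pos : 0 < INR (n * (n - 1)).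
Proof. apply: lt_0_INR; apply/ltP. nia. Qed.

Lemma N_pos : 0 < INR (n ^_ k).
Proof. apply: lt_0_INR; apply/ltP. by rewrite ffact_gt0. Qed.

Lemma cc_ge0 : 0 <= cc.
Proof. rewrite /cc /Rdiv. apply: Rmult_le_pos; [apply: pos_INR|]. left; apply: Rinv_0_lt_compat; exact: nn_pos. Qed.

Lemma ff_bd S a : a \in nonedges H ->
  Rabs (tdens F (Gsample H (a |: S)) - tdens F (Gsample H S)) <= cc.
Proof.
move=> aA. have a12 : a.1 != a.2.
  move: aA; rewrite inE => /andP[lt _]. apply/eqP => E; by rewrite E ltnn in lt.
set h1 := inj_hom F (Gsample H (a |: S)). set h0 := inj_hom F (Gsample H S).
have Hcard : #|h1| = (#|h0| + #|h1 :\: h0|)%N.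
  by rewrite -(cardsID h0 h1) (setIidPr (hom_sub S a)).
have Hd := hom_diff S a a12.
rewrite /tdens -/h1 -/h0 Hcard plus_INR.
have NP := N_pos. have nnP := nn_pos.
set N := INR (n ^_ k). set D := INR #|h1 :\: h0|.
have HD : D * INR (n * (n - 1)) <= INR (k * (k - 1)) * N.
  rewrite /D /N -!mult_INR; apply: le_INR; apply/leP; exact: Hd.
have -> : (INR #|h0| + D) / N - INR #|h0| / N = D / N by field; apply: Rgt_not_eq.
have D0 : 0 <= D by apply: pos_INR.
rewrite Rabs_pos_eq; last by rewrite /Rdiv; apply: Rmult_le_pos => //; left; apply: Rinv_0_lt_compat.
exact: frac_le.
Qed.


Definition Eg (g : {ffun 'I_k -> 'I_n}) := [set q in edges F | ~~ H (g q.1) (g q.2)].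
Definition hq (g : {ffun 'I_k -> 'I_n}) (q : 'I_k * 'I_k) := np (g q.1) (g q.2).
Definition bad (g : {ffun 'I_k -> 'I_n}) := [exists q, (q \in edges F) && H (g q.1) (g q.2)].

Lemma np_lt i j : i != j -> ((np i j).1 < (np i j).2)%N.
Proof.
move=> ij. rewrite /np. case: (ltngtP i j) => //= e.
by move/val_inj: e => e; rewrite e eqxx in ij.
Qed.

Lemma H_np i j : H (np i j).1 (np i j).2 = H i j.
Proof. by rewrite /np; case: ifP => _ //=; rewrite HS. Qed.

Lemma np_sym i j : np i j = np j i.
Proof.
rewrite /np. case: (ltngtP i j) => // e.
by move/val_inj: e => ->.
Qed.

Lemma pairS (S : {set 'I_n * 'I_n}) i j : S \subset nonedges H ->
  ((i, j) \in S) || ((j, i) \in S) = (np i j \in S).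
Proof.
move=> SA. rewrite /np.
have notin : forall a b : 'I_n, (b < a)%N -> (a, b) \notin S.
  move=> a b ba. apply/negP => /(subsetP SA). rewrite inE /= => /andP[ab _].
  by move: (ltn_trans ab ba); rewrite ltnn.
case: (ltngtP i j) => [ij|ji|e].
- by rewrite (negbTE (notin j i ij)) orbF.
- by rewrite (negbTE (notin i j ji)).
- by move/val_inj: e => ->; rewrite orbb.
Qed.

Lemma hom_iff g (S : {set 'I_n * 'I_n}) : g \in injs k n -> S \subset nonedges H ->
  (g \in inj_hom F (Gsample H S)) = (hq g @: Eg g \subset S).
Proof.
move=> gi SA. have ginj := injsP _ gi.
apply/inj_homP/subsetP => [[_ Hg] p /imsetP [q qE ->] | Hsub].
- move: qE; rewrite inE => /andP [qF nH]. move: qF; rewrite inE => /andP[_ Fq].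
  by move: (Hg _ _ Fq); rewrite /Gsample (negbTE nH) /= (pairS _ _ _ SA).
- split => // u v Fuv. rewrite /Gsample. case Huv: (H (g u) (g v)) => //=.
  rewrite (pairS _ _ _ SA).
  case: (ltngtP u v) => [uv|vu|e].
  + apply: Hsub; apply/imsetP; exists (u, v) => //.
    by rewrite inE /= inE /= uv Fuv Huv.
  + rewrite np_sym. apply: Hsub; apply/imsetP; exists (v, u) => //.
    by rewrite inE /= inE /= vu FS Fuv HS Huv.
  + by move/val_inj: e => e; rewrite e Firr in Fuv.
Qed.

Lemma hq_in_A g : g \in injs k n -> hq g @: Eg g \subset nonedges H.
Proof.
move=> gi. have ginj := injsP _ gi.
apply/subsetP => _ /imsetP[q qE ->]. move: qE; rewrite !inE => /andP[/andP[q12 Fq] nH].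
have gq : g q.1 != g q.2.
  apply/eqP => /ginj e. by rewrite e ltnn in q12.
by rewrite /hq np_lt // H_np nH.
Qed.

Lemma hq_inj g : g \in injs k n -> {in Eg g &, injective (hq g)}.
Proof.
move=> gi. have ginj := injsP _ gi.
move=> [q1 q2] [r1 r2]; rewrite !inE /= => /andP[/andP[q12 _] _] /andP[/andP[r12 _] _].
rewrite /hq /np /=.
case: ifP => _; case: ifP => _ => -[/ginj e1 /ginj e2]; subst => //.
- by move: (ltn_trans q12 r12); rewrite ltnn.
- by move: (ltn_trans q12 r12); rewrite ltnn.
Qed.

Lemma Ex_hom g : g \in injs k n ->
  Ex (nonedges H) w (fun S => if g \in inj_hom F (Gsample H S) then 1 else 0) =
  \big[Rmult/1]_(q in Eg g) kappa (x (g q.1)) (x (g q.2)).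
Proof.
move=> gi.
rewrite (Ex_ext _ _ _ (fun S => if hq g @: Eg g \subset S then 1 else 0)); last first.
  by move=> S SA; rewrite hom_iff.
rewrite Ex_sub; last exact: hq_in_A.
rewrite big_imset /=; last exact: hq_inj.
by apply: eq_bigr => q _; rewrite /hq w_np.
Qed.

Lemma prod01 (I : finType) (P : pred I) (G : I -> R) :
  (forall i, P i -> 0 <= G i <= 1) -> 0 <= \big[Rmult/1]_(i | P i) G i <= 1.
Proof.
move=> h. apply: (big_ind (fun a => 0 <= a <= 1)) => //.
- lra.
- move=> a b ha hb; nra.
Qed.

Lemma TF_bound g : g \in injs k n ->
  Rabs (Ex (nonedges H) w (fun S => if g \in inj_hom F (Gsample H S) then 1 else 0)
        - T_F F kappa (fun i => x (g i))) <= (if bad g then 1 else 0).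
Proof.
move=> gi. rewrite Ex_hom //.
rewrite /T_F [\big[Rmult/1]_(p in edges F) _](bigID (fun q => ~~ H (g q.1) (g q.2))) /=.
have -> : \big[Rmult/1]_(i in edges F | ~~ H (g i.1) (g i.2)) kappa (x (g i.1)) (x (g i.2))
        = \big[Rmult/1]_(q in Eg g) kappa (x (g q.1)) (x (g q.2)).
  apply: eq_bigl => q. by rewrite /Eg in_set.
set P := \big[Rmult/1]_(q in Eg g) _.
set Q := \big[Rmult/1]_(i in edges F | ~~ ~~ H _ _) _.
have HP : 0 <= P <= 1 by apply: prod01 => q _; apply: kap01.
have HQ : 0 <= Q <= 1 by apply: prod01 => q _; apply: kap01.
case: (boolP (bad g)) => b.
- apply: Rabs_le. nra.
- have -> : Q = 1.
    rewrite /Q big_pred0 // => q. apply/negbTE. rewrite negbK.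
    move/existsPn: b => /(_ q). done.
  have -> : P - P * 1 = 0 by ring.
  rewrite Rabs_R0. lra.
Qed.

Lemma bad_count :
  (#|[set g in injs k n | bad g]| * (n * (n - 1)) <= #|edges H| * (k * (k - 1)) * n ^_ k)%N.
Proof.
apply: (@leq_trans ((\sum_(e : ('I_n * 'I_n) * ('I_k * 'I_k) | (e.1 \in edges H) && F e.2.1 e.2.2)
   #|fib k n e.2.1 e.2.2 e.1.1 e.1.2|) * (n * (n - 1)))).
- rewrite leq_mul2r; apply/orP; right. apply: card_le_sum => g.
  rewrite inE => /andP[gi /existsP[q /andP[qE Hq]]].
  have ginj := injsP _ gi.
  move: qE; rewrite inE => /andP[q12 Fq].
  case: (ltngtP (g q.1) (g q.2)) => [lt|gt|e].
  + exists ((g q.1, g q.2), q). by rewrite /= inE /= lt Hq Fq inE gi !eqxx.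
  + exists ((g q.2, g q.1), (q.2, q.1)).
    by rewrite /= inE /= gt (HS (g q.2)) Hq (FS q.2) Fq inE gi !eqxx.
  + move/val_inj/ginj: e => e. by rewrite e ltnn in q12.
- rewrite big_distrl /=.
  apply: (@leq_trans (\sum_(e : ('I_n * 'I_n) * ('I_k * 'I_k) | (e.1 \in edges H) && F e.2.1 e.2.2) n ^_ k)).
  + apply: leq_sum => e /andP[eH _]. apply: fib_bound.
    move: eH; rewrite inE => /andP[lt _]. apply/eqP => E; by rewrite E ltnn in lt.
  + rewrite sum_nat_cond_const leq_mul2r; apply/orP; right.
    have -> : [set e : ('I_n * 'I_n) * ('I_k * 'I_k) | (e.1 \in edges H) && F e.2.1 e.2.2]
            = setX (edges H) [set q : 'I_k * 'I_k | F q.1 q.2].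
      by apply/setP => -[e q]; rewrite !inE.
    rewrite cardsX leq_mul2l; apply/orP; right.
    rewrite -card_offdiag. apply: subset_leq_card. apply/subsetP => q; rewrite !inE.
    move=> Fq; apply/eqP => E; move: Fq; by rewrite E Firr.
Qed.

Lemma tdens_sum (G : rel 'I_n) :
  tdens F G = / INR (n ^_ k) *
    \big[Rplus/0]_(g in injs k n) (if g \in inj_hom F G then 1 else 0).
Proof.
have E : INR #|inj_hom F G| =
    \big[Rplus/0]_(g in injs k n) (if g \in inj_hom F G then 1 else 0).
  rewrite -sum1_card.
  rewrite (eq_bigl (fun g => (g \in injs k n) && (g \in inj_hom F G))); last first.
    move=> g /=; apply/idP/andP => [h|[]//]; split=> //; by case/inj_homP: h.
  rewrite -big_mkcondr INR_sum. by apply: eq_bigr.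
rewrite /tdens E /Rdiv Rmult_comm //.
Qed.

Lemma bad_sum :
  \big[Rplus/0]_(g in injs k n) (if bad g then 1 else 0) = INR #|[set g in injs k n | bad g]|.
Proof.
rewrite -sum1dep_card INR_sum -big_mkcondr. by apply: eq_bigr.
Qed.

Lemma Ex_mu :
  Rabs (Ex (nonedges H) w (fun S => tdens F (Gsample H S)) - mu_F F kappa x)
    <= INR #|edges H| * cc.
Proof.
have NP := N_pos. have nnP := nn_pos.
rewrite (Ex_ext _ _ _ (fun S => / INR (n ^_ k) *
   \big[Rplus/0]_(g in injs k n) (if g \in inj_hom F (Gsample H S) then 1 else 0)));
  last by move=> S _; rewrite tdens_sum.
rewrite Ex_scale Ex_sum /mu_F -Rmult_minus_distr_l sum_minus Rabs_mult.
rewrite (Rabs_pos_eq (/ _)); last by left; apply: Rinv_0_lt_compat.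
apply: (Rle_trans _ (/ INR (n ^_ k) * INR #|[set g in injs k n | bad g]|)).
  apply: Rmult_le_compat_l; first by left; apply: Rinv_0_lt_compat.
  rewrite -bad_sum. apply: Rle_trans (Rabs_sum _ _ _) _. apply: sum_le => g gi.
  exact: TF_bound.
have h : INR #|[set g in injs k n | bad g]| * INR (n * (n - 1))
         <= INR #|edges H| * INR (k * (k - 1)) * INR (n ^_ k).
  rewrite -!mult_INR; apply: le_INR; apply/leP; exact: bad_count.
rewrite /cc Rmult_comm.
have -> : INR #|edges H| * (INR (k * (k - 1)) / INR (n * (n - 1)))
        = (INR #|edges H| * INR (k * (k - 1))) / INR (n * (n - 1)) by rewrite /Rdiv Rmult_assoc.
exact: frac_le.
Qed.

Lemma card_lt_ord (j : 'I_n) : #|[set i : 'I_n | (i < j)%N]| = j.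
Proof.
have -> : [set i : 'I_n | (i < j)%N] = widen_ord (ltnW (ltn_ord j)) @: [set: 'I_j].
  apply/setP => i; rewrite inE; apply/idP/imsetP => [ij | [i' _ ->]].
  - exists (Ordinal ij) => //; exact: val_inj.
  - by rewrite /= ltn_ord.
rewrite card_imset ?cardsT ?card_ord //. by move=> a b /(congr1 val) /= e; apply: val_inj.
Qed.

Lemma lt_pairs : (#|edges H| + #|nonedges H| = 'C(n, 2))%N.
Proof.
set L := [set p : 'I_n * 'I_n | (p.1 < p.2)%N].
have E1 : L :&: [set p | H p.1 p.2] = edges H by apply/setP => p; rewrite !inE.
have E2 : L :\: [set p | H p.1 p.2] = nonedges H by apply/setP => p; rewrite !inE andbC.
rewrite -E1 -E2 cardsID.
rewrite -sum1dep_card.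
rewrite -(pair_big_dep xpredT (fun i j : 'I_n => (i < j)%N) (fun _ _ => 1%N)) /=.
rewrite (exchange_big_dep xpredT) //=.
rewrite (eq_bigr (fun j : 'I_n => nat_of_ord j)); last first.
  move=> j _. by rewrite sum1dep_card card_lt_ord.
by rewrite -(big_mkord xpredT (fun j => j)) bin2_sum.
Qed.

Lemma main_bound eps : INR #|edges H| * cc < eps ->
  prob_G kappa x H (fun G => Rltb eps (Rabs (tdens F G - mu_F F kappa x)))
  <= 2 * exp (- (2 * (eps - INR #|edges H| * cc) ^ 2)
                / ((INR 'C(n, 2) - INR #|edges H|) * cc ^ 2)).
Proof.
move=> Heps.
set A := nonedges H. set m := INR #|edges H|.
pose f := fun S => tdens F (Gsample H S).
set mu := mu_F F kappa x.
set d := eps - m * cc.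
have Hd : 0 < d by rewrite /d /m; lra.
have Hpg : prob_G kappa x H (fun G => Rltb eps (Rabs (tdens F G - mu)))
         = Ex A w (fun S => if Rltb eps (Rabs (f S - mu)) then 1 else 0).
  rewrite /prob_G /Ex big_mkcondr. apply: eq_bigr => S _. rewrite /f.
  case: ifP => _; [rewrite Rmult_1_r | rewrite Rmult_0_r]; reflexivity.
have Emu : Rabs (Ex A w f - mu) <= m * cc by exact: Ex_mu.
have Hw : forall p, p \in A -> 0 <= w p <= 1 by move=> p _; exact: w01.
have Hbd : forall (S : {set 'I_n * 'I_n}) (a : 'I_n * 'I_n), a \in A -> S \subset A :\ a ->
    Rabs (f (a |: S) - f S) <= cc by move=> S a aA _; exact: ff_bd.
pose g2 := fun S : {set 'I_n * 'I_n} => -1 * f S.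
have Eg2 : Ex A w g2 = -1 * Ex A w f by rewrite /g2 Ex_scale.
have Hbd2 : forall (S : {set 'I_n * 'I_n}) (a : 'I_n * 'I_n), a \in A -> S \subset A :\ a ->
    Rabs (g2 (a |: S) - g2 S) <= cc.
  move=> S a aA _. rewrite /g2.
  have -> : -1 * f (a |: S) - -1 * f S = - (f (a |: S) - f S) by ring.
  rewrite Rabs_Ropp; exact: ff_bd.
have Hsplit : Ex A w (fun S => if Rltb eps (Rabs (f S - mu)) then 1 else 0) <=
   Ex A w (fun S => if Rltb d (f S - Ex A w f) then 1 else 0) +
   Ex A w (fun S => if Rltb d (g2 S - Ex A w g2) then 1 else 0).
  apply: (Rle_trans _ (1 * Ex A w (fun S => if Rltb d (f S - Ex A w f) then 1 else 0) +
     1 * Ex A w (fun S => if Rltb d (g2 S - Ex A w g2) then 1 else 0))); last lra.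
  rewrite -Ex_lin. apply: Ex_le => // S _.
  have Emu' := abs_le_inv _ _ Emu.
  rewrite Eg2 /g2 /Rltb.
  case: (Rlt_dec eps _) => h0 /=; last by case: (Rlt_dec d _) => /=; case: (Rlt_dec d _) => /=; lra.
  case: (Rlt_dec d _) => h1 /=; case: (Rlt_dec d _) => h2 /=; try lra.
  exfalso. move: h0 h1 h2. rewrite /d. split_Rabs; lra.
have Hcount : INR #|A| + m = INR 'C(n, 2).
  by rewrite /A /m -plus_INR -lt_pairs addnC.
have HA0 : 0 <= INR #|A| by apply: pos_INR.
have cc0 := cc_ge0.
have Hprob1 : Ex A w (fun S => if Rltb eps (Rabs (f S - mu)) then 1 else 0) <= 1.
  rewrite -[X in _ <= X](Ex_const A w 1). apply: Ex_le => // S _. case: ifP => _; lra.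
rewrite -/d Hpg.
case: (Req_dec ((INR 'C(n, 2) - m) * cc ^ 2) 0) => HD.
- rewrite HD /Rdiv Rinv_0 Rmult_0_r exp_0. lra.
- have Dpos : 0 < (INR 'C(n, 2) - m) * cc ^ 2.
    have : 0 <= (INR 'C(n, 2) - m) * cc ^ 2.
      apply: Rmult_le_pos; [lra | apply: pow2_ge_0].
    lra.
  have HN : INR #|A| <= INR 'C(n, 2) - m by lra.
  have T1 := tail _ _ _ _ _ _ _ Hw cc0 Hbd Hd HN Dpos.
  have T2 := tail _ _ _ _ _ _ _ Hw cc0 Hbd2 Hd HN Dpos.
  lra.
Qed.

End Graph.

Theorem lemma1 (kappa : R -> R -> R) (k n : nat) (F : rel 'I_k) (H : rel 'I_n)
  (x : 'I_n -> R) (eps : R) :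
  standard_kernel kappa ->
  simple_graph F -> simple_graph H ->
  (k <= n)%N -> (2 <= n)%N ->
  (forall i, 0 <= x i <= 1) ->
  let m := #|edges H| in
  let c := INR (k * (k - 1))%N / INR (n * (n - 1))%N in
  INR m * c < eps ->
  prob_G kappa x H (fun G => Rltb eps (Rabs (tdens F G - mu_F F kappa x)))
  <= 2 * exp (- (2 * (eps - INR m * c) ^ 2)
                / ((INR 'C(n, 2) - INR m) * c ^ 2)).
Proof.
move=> Hk HF HH Hkn Hn2 Hx m c Hlt.
exact: (main_bound _ _ _ _ _ _ Hk HF HH Hx Hn2 Hkn _ Hlt).
Qed.
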